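(* Let $f:\mathbb{R}^n\times D\to\mathbb{R}^n$ and a forcing function $d:[0,\infty)\to D$ be given, and consider the Cauchy problem $\dot y(t)=f(y(t),d(t))$, $y(t_0)=y_0$. Denote its exact solution by $\tilde y(t,y_0,t_0)$ (so $\tilde y(t_0,y_0,t_0)=y_0$). Let $M\subset\mathbb{R}^n$ be a manifold such that $\tilde y(t,y_0,t_0)\in M$ for all $t\ge t_0$ and all $y_0\in M$. Let $y_0\in M$ and let $y(t)=\tilde y(t,y_0,0)$ be the exact solution with initial time $0$. Assume $y$ is locally exponentially stable on $M$, i.e. there exist $\delta>0$, $\gamma>0$, $C_1<\infty$ such that $$\|\tilde y(t,y^{(1)}_0,t_0)-\tilde y(t,y^{(2)}_0,t_0)\|\le C_1 e^{-\gamma(t-t_0)}\|y^{(1)}_0-y^{(2)}_0\|$$ for all $t\ge t_0\ge 0$ and all $y^{(1)}_0,y^{(2)}_0\in M$ with $\|y^{(1)}_0-y(t_0)\|\le\delta$, $\|y^{(2)}_0-y(t_0)\|\le\delta$. Consider a numerical algorithm on $[0,T]$ with constant time step $\Delta t>0$, time instances ${}^n t=n\Delta t$, $n=0,1,\dots,N$, ${}^N t=T$, producing approximations ${}^n y$ with ${}^0 y=y_0$, such that for some constant $C_2<\infty$ the one-step error satisfies $$\|\tilde y({}^{n+1}t,{}^n y,{}^n t)-{}^{n+1}y\|\le C_2(\Delta t)^2\quad\text{for all } n,$$ and such that every numerical approximation lies exactly on the manifold, ${}^n y\in M$ for all $n$. Then there exists a constant $C<\infty$, not depending on the length $T$ of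 the time interval, such that $\|{}^n y-y({}^n t)\|\le C\,\Delta t$ for all $n$, as $\Delta t\to 0$.
   Context: $\|\cdot\|$ denotes a norm on $\mathbb{R}^n$. The system is a system with input: $d(t)$ is a given forcing function, and the initial value is given. ''As $\Delta t\to0$'' means the estimate holds for all sufficiently small $\Delta t$. *)

(* Defs.v *)
From HB Require Import structures.
From mathcomp Require Import all_boot all_order all_algebra.
From mathcomp Require Import all_classical all_reals all_analysis.
Set Implicit Arguments. Unset Strict Implicit. Unset Printing Implicit Defensive.
Import Order.TTheory GRing.Theory Num.Theory.
Import numFieldNormedType.Exports.
Local Open Scope classical_set_scope.
Local Open Scope ring_scope.

Definition is_norm (R : realType) (n : nat) (nrm : 'rV[R]_n -> R) : Prop :=
  [/\ forall x y, nrm (x + y) <= nrm x + nrm y,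
      forall (a : R) x, nrm (a *: x) = `|a| * nrm x
    & forall x, nrm x = 0 -> x = 0].

Definition exact_solution (R : realType) (n : nat) (D : Type)
  (f : 'rV[R]_n -> D -> 'rV[R]_n) (d : R -> D) (M : set 'rV[R]_n)
  (ytil : R -> 'rV[R]_n -> R -> 'rV[R]_n) : Prop :=
  forall (t0 : R) (y0 : 'rV[R]_n), 0 <= t0 -> M y0 ->
    [/\ ytil t0 y0 t0 = y0,
        (fun s => ytil s y0 t0) @ t0^'+ --> y0,
        (forall t, t0 < t ->
           is_derive t (1 : R) (fun s => ytil s y0 t0) (f (ytil t y0 t0) (d t)))
      & (forall z : R -> 'rV[R]_n, z t0 = y0 -> z @ t0^'+ --> y0 ->
           (forall t, t0 < t -> is_derive t (1 : R) z (f (z t) (d t))) ->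
           forall t, t0 <= t -> z t = ytil t y0 t0)].

(* Main.v *)
Require Import Defs.
From HB Require Import structures.
From mathcomp Require Import all_boot all_order all_algebra.
From mathcomp Require Import all_classical all_reals all_analysis.
From mathcomp Require Import ring lra.
Import Order.TTheory GRing.Theory Num.Theory.
Import numFieldNormedType.Exports.
Local Open Scope classical_set_scope.
Local Open Scope ring_scope.

Section NormFacts.
Variables (R : realType) (n : nat) (nrm : 'rV[R]_n -> R).
Hypothesis hn : is_norm nrm.

Lemma nrm0 : nrm 0 = 0.
Proof. case: hn => _ hs _; by rewrite -(scale0r (0 : 'rV[R]_n)) hs normr0 mul0r. Qed.

Lemma nrmN x : nrm (- x) = nrm x.
Proof. case: hn => _ hs _; by rewrite -scaleN1r hs normrN normr1 mul1r. Qed.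

Lemma nrm_ge0 x : 0 <= nrm x.
Proof.
case: hn => ht _ _; have := ht x (- x); rewrite subrr nrm0 nrmN => h.
lra.
Qed.

Lemma nrm_sym a b : nrm (a - b) = nrm (b - a).
Proof. by rewrite -nrmN opprB. Qed.

Lemma nrm_tri a b c : nrm (a - c) <= nrm (a - b) + nrm (b - c).
Proof. case: hn => ht _ _; have := ht (a - b) (b - c). by rewrite addrA subrK. Qed.

Lemma nrm_subrr a : nrm (a - a) = 0.
Proof. by rewrite subrr nrm0. Qed.
End NormFacts.
Arguments nrm0 {R n nrm}. Arguments nrmN {R n nrm}. Arguments nrm_ge0 {R n nrm}.
Arguments nrm_sym {R n nrm}. Arguments nrm_tri {R n nrm}. Arguments nrm_subrr {R n nrm}.

Lemma flow_prop (R : realType) (n : nat) (D : Type)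
  (f : 'rV[R]_n -> D -> 'rV[R]_n) (d : R -> D) (M : set 'rV[R]_n)
  (ytil : R -> 'rV[R]_n -> R -> 'rV[R]_n) :
  exact_solution f d M ytil ->
  (forall t0 t z, 0 <= t0 -> t0 <= t -> M z -> M (ytil t z t0)) ->
  forall s0 s1 t z, 0 <= s0 -> s0 <= s1 -> s1 <= t -> M z ->
   ytil t z s0 = ytil t (ytil s1 z s0) s1.
Proof.
move=> ex inv s0 s1 t z s00 s01 s1t Mz.
have [e01|l01] := eqVneq s0 s1.
  by subst s1; have [-> _ _ _] := ex s0 z s00 Mz.
have lt01 : s0 < s1 by rewrite lt_neqAle l01.
have [_ _ hd _] := ex s0 z s00 Mz.
have s10 : 0 <= s1 by apply: le_trans s01.
have Mw := inv s0 s1 z s00 s01 Mz.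
have [_ _ _ uniq] := ex s1 (ytil s1 z s0) s10 Mw.
apply: (uniq (fun s => ytil s z s0)) => //.
- apply: cvg_at_right_filter.
  have := @ex_derive _ _ _ _ _ _ _ (hd s1 lt01).
  by move/derivable1_diffP/differentiable_continuous.
- by move=> t' lt; apply: hd; apply: lt_trans lt.
Qed.


Arguments flow_prop {R n D f d M ytil}.

Theorem theorem1 (R : realType) (n : nat) (nrm : 'rV[R]_n -> R) (D : Type)
  (f : 'rV[R]_n -> D -> 'rV[R]_n) (d : R -> D) (M : set 'rV[R]_n)
  (ytil : R -> 'rV[R]_n -> R -> 'rV[R]_n) (y0 : 'rV[R]_n)
  (Y : R -> nat -> nat -> 'rV[R]_n) (C2 : R) :
  is_norm nrm ->
  exact_solution f d M ytil ->
  (forall t0 t z, 0 <= t0 -> t0 <= t -> M z -> M (ytil t z t0)) ->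
  M y0 ->
  (exists (delta gamma C1 : R), 0 < delta /\ 0 < gamma /\
     forall t0 t y1 y2, 0 <= t0 -> t0 <= t -> M y1 -> M y2 ->
       nrm (y1 - ytil t0 y0 0) <= delta -> nrm (y2 - ytil t0 y0 0) <= delta ->
       nrm (ytil t y1 t0 - ytil t y2 t0)
         <= C1 * expR (- gamma * (t - t0)) * nrm (y1 - y2)) ->
  (forall (T : R) (N : nat), 0 < T -> (0 < N)%N ->
     [/\ Y T N 0 = y0,
         (forall k, (k <= N)%N -> M (Y T N k))
       & forall k, (k < N)%N ->
           nrm (ytil (k.+1%:R * (T / N%:R)) (Y T N k) (k%:R * (T / N%:R))
                - Y T N k.+1) <= C2 * (T / N%:R) ^+ 2]) ->
  exists (C h0 : R), 0 < h0 /\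
    forall (T : R) (N : nat), 0 < T -> (0 < N)%N -> T / N%:R < h0 ->
      forall k, (k <= N)%N ->
        nrm (Y T N k - ytil (k%:R * (T / N%:R)) y0 0) <= C * (T / N%:R).
Proof.
move=> hn ex inv My0 [delta [gamma [C1 [dp [gp stab]]]]] num.
have fl := flow_prop ex inv.
set c1 := `|C1|; set c2 := `|C2|.
have c1p : 0 <= c1 by exact: normr_ge0.
have c2p : 0 <= c2 by exact: normr_ge0.
have stab' : forall t0 t y1 y2, 0 <= t0 -> t0 <= t -> M y1 -> M y2 ->
       nrm (y1 - ytil t0 y0 0) <= delta -> nrm (y2 - ytil t0 y0 0) <= delta ->
       nrm (ytil t y1 t0 - ytil t y2 t0)
         <= c1 * expR (- gamma * (t - t0)) * nrm (y1 - y2).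
  move=> t0 t y1 y2 h1 h2 h3 h4 h5 h6.
  apply: (le_trans (stab t0 t y1 y2 h1 h2 h3 h4 h5 h6)).
  rewrite -!mulrA; apply: ler_wpM2r; last exact: ler_norm.
  apply: mulr_ge0; [exact: ltW (expR_gt0 _)|exact: (nrm_ge0 hn (y1 - y2))].
set K := c1 * c2 * (1 + gamma) / gamma.
have Kp : 0 <= K.
  rewrite /K; apply: divr_ge0; last lra.
  apply: mulr_ge0; [exact: mulr_ge0|lra].
set S := 1 + K + c1 * K + c2.
have Sp : 0 < S by rewrite /S; have := mulr_ge0 c1p Kp; lra.
exists K, (Num.min 1 (delta / S)); split.
  by rewrite lt_min ltr01 divr_gt0.
move=> T N T0 N0 hlt.
set h := T / N%:R.
have hp : 0 < h by rewrite /h divr_gt0 // ltr0n.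
move: hlt; rewrite lt_min => /andP[h1 hd]; rewrite -/h in h1 hd.
have hS : S * h <= delta by rewrite mulrC -ler_pdivlMr //; exact: ltW.
have Kh : K * h <= delta.
  have := mulr_ge0 c1p Kp; have := mulr_ge0 (mulr_ge0 c1p Kp) (ltW hp).
  rewrite /S in hS; nra.
have c2K : c2 * h ^+ 2 + c1 * (K * h) <= delta.
  have hh : h ^+ 2 <= h.
    rewrite expr2 -subr_ge0 -[X in X - _]mulr1 -mulrBr; apply: mulr_ge0; lra.
  have : c2 * (h - h ^+ 2) >= 0 by apply: mulr_ge0 => //; lra.
  have := mulr_ge0 Kp (ltW hp); rewrite /S in hS; nra.
have [Y0 MY step] := num T N T0 N0.
have tge0 : forall j : nat, 0 <= j%:R * h by move=> j; apply: mulr_ge0 => //; exact: ltW.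
have tle : forall i j : nat, (i <= j)%N -> i%:R * h <= j%:R * h.
  by move=> i j ij; apply: ler_wpM2r; [exact: ltW|rewrite ler_nat].
have tS : forall j : nat, j.+1%:R * h = j%:R * h + h.
  by move=> j; rewrite -addn1 natrD mulrDl mul1r.
set q := expR (- gamma * h).
set u := gamma * h.
have up : 0 < u by rewrite /u mulr_gt0.
set L := (1 + u) / u.
have qp : 0 < q by apply: expR_gt0.
have qu : q * (1 + u) <= 1.
  have := expRxMexpNx_1 u; rewrite /q mulNr => e.
  rewrite -[X in _ <= X]e mulrC; apply: ler_wpM2r; [exact: ltW (expR_gt0 _)|exact: expR_ge1Dx].
have Lq : 1 + q * L <= L.
  have : L - q * L - 1 = (1 - q * (1 + u)) / u.
    by rewrite /L; field; apply: lt0r_neq0.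
  have : 0 <= (1 - q * (1 + u)) / u by apply: divr_ge0; lra.
  lra.
have Lp : 0 <= L by rewrite /L; apply: divr_ge0; lra.
set B := c1 * c2 * h ^+ 2.
have Bp : 0 <= B by rewrite /B; apply: mulr_ge0; [apply: mulr_ge0|apply: exprn_ge0; exact: ltW].
have BL : B * L <= K * h.
  have : K * h - B * L = c1 * c2 * h * (1 - h).
    by rewrite /K /B /L /u; field; apply/andP; split; apply: lt0r_neq0.
  have : 0 <= c1 * c2 * h * (1 - h).
    by apply: mulr_ge0; [apply: mulr_ge0; [apply: mulr_ge0|exact: ltW]|lra].
  lra.
pose y t := ytil t y0 0.
have My : forall t, 0 <= t -> M (y t) by move=> t t0; apply: inv.
elim/ltn_ind => k IH kN.
set tk := k%:R * h.
have aj : forall j, (j <= k)%N ->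
    nrm (ytil tk (Y T N j) (j%:R * h) - y tk) <= B * expR (- gamma * (tk - j%:R * h)) * L.
  elim => [_|j IHj jk].
    rewrite Y0 mul0r (nrm_subrr hn).
    apply: mulr_ge0; [apply: mulr_ge0; [exact: Bp|exact: ltW (expR_gt0 _)]|exact: Lp].
  have jk' : (j <= k)%N by apply: ltnW.
  have jN : (j <= N)%N by apply: leq_trans kN.
  have ej : nrm (Y T N j - y (j%:R * h)) <= K * h := IH j jk jN.
  have := IHj jk'.
  set tj := j%:R * h.
  set tj1 := j.+1%:R * h.
  have tjj1 : tj <= tj1 by apply: tle.
  have tj1k : tj1 <= tk by apply: tle.
  set W := ytil tj1 (Y T N j) tj.
  have MYj : M (Y T N j) by apply: MY.
  have MW : M W by apply: inv => //; apply: tge0.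
  rewrite (fl tj tj1 tk (Y T N j) (tge0 j) tjj1 tj1k MYj) -/W => aj.
  have ytj1 : y tj1 = ytil tj1 (y tj) tj.
    by rewrite /y (fl 0 tj tj1 y0) //; apply: tge0.
  have eW : nrm (W - y tj1) <= c1 * nrm (Y T N j - y tj).
    have H5 : nrm (Y T N j - ytil tj y0 0) <= delta by apply: le_trans ej Kh.
    have H6 : nrm (y tj - ytil tj y0 0) <= delta.
      by rewrite /y (nrm_subrr hn); exact: ltW.
    rewrite ytj1; apply: le_trans
      (stab' tj tj1 (Y T N j) (y tj) (tge0 j) tjj1 MYj (My tj (tge0 j)) H5 H6) _.
    rewrite -mulrA ler_wpM2l // -[X in _ <= X]mul1r ler_wpM2r //; first exact: (nrm_ge0 hn _).
    rewrite expR_le1 mulNr oppr_le0; apply: mulr_ge0; [exact: ltW|lra].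
  have sj : nrm (Y T N j.+1 - W) <= c2 * h ^+ 2.
    rewrite (nrm_sym hn); apply: le_trans (step j _) _; first by apply: leq_trans kN.
    by apply: ler_wpM2r; [rewrite exprn_ge0 //; exact: ltW| exact: ler_norm].
  have eY1 : nrm (Y T N j.+1 - y tj1) <= delta.
    apply: le_trans (nrm_tri hn _ W _) _.
    have := ler_wpM2l c1p ej; have := nrm_ge0 hn (Y T N j - y tj); lra.
  have eW' : nrm (W - y tj1) <= delta.
    have := ler_wpM2l c1p ej; have := nrm_ge0 hn (Y T N j.+1 - W); lra.
  have term : nrm (ytil tk (Y T N j.+1) tj1 - ytil tk W tj1)
       <= B * expR (- gamma * (tk - tj1)).
    have MY1 : M (Y T N j.+1) by apply: MY; apply: leq_trans kN.
    apply: le_trans (stab' tj1 tk (Y T N j.+1) W (tge0 j.+1) tj1k MY1 MW eY1 eW') _.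
    apply: le_trans (ler_wpM2l _ sj) _.
      by apply: mulr_ge0 => //; exact: ltW (expR_gt0 _).
    suff -> : B * expR (- gamma * (tk - tj1))
       = c1 * expR (- gamma * (tk - tj1)) * (c2 * h ^+ 2) by [].
    by rewrite /B; ring.
  have eE : expR (- gamma * (tk - tj)) = expR (- gamma * (tk - tj1)) * q.
    by rewrite /q -expRD; congr expR; rewrite /tj1 tS -/tj; ring.
  rewrite eE in aj.
  apply: le_trans (nrm_tri hn _ (ytil tk W tj1) _) _.
  set E := expR (- gamma * (tk - tj1)).
  have Ep : 0 <= E by exact: ltW (expR_gt0 _).
  have BE : 0 <= B * E by apply: mulr_ge0.
  have := ler_wpM2l BE Lq.
  move: aj term; rewrite -/E => aj term.
  have e1 : B * (E * q) * L = B * E * (q * L) by ring.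
  have e2 : B * E * (1 + q * L) = B * E + B * E * (q * L) by ring.
  lra.
have := aj k (leqnn k).
have [-> _ _ _] := ex tk (Y T N k) (tge0 k) (MY k kN).
rewrite subrr mulr0 expR0 mulr1 => hk.
by apply: le_trans hk BL.
Qed.
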